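(* Let $(\Omega,\mathcal F,\mathcal P)$ be pre-Hahn-localizable with localization $\mathcal Q$. Then (1) $\mathcal F^{\mathcal P}=\mathcal F^{\mathcal Q}$, and (2) $(\Omega,\mathcal F^{\mathcal P},\mathcal P)$ (measures extended to $\mathcal F^{\mathcal P}$) is pre-Hahn-localizable. Moreover, if $(\Omega,\mathcal F,\mathcal P)$ is Hahn-localizable with a localization having pairwise disjoint supports, then $(\Omega,\mathcal F^{\mathcal P},\mathcal P)$ is Hahn-localizable.
   Context: $\mathcal P$ is a family of probability measures on $\mathcal F$. For a probability measure $P$, $\mathcal F^P=\{F\cup Z:F\in\mathcal F, Z\subseteq N \text{ for some } N\in\mathcal F,P(N)=0\}$, and for a family $\mathcal R$, $\mathcal F^{\mathcal R}=\bigcap_{R\in\mathcal R}\mathcal F^R$; each measure extends uniquely to its completion and hence to $\mathcal F^{\mathcal R}$. $\mathcal A\lll\mathcal B$ means every $A\in\mathcal A$ is absolutely continuous w.r.t. some $B\in\mathcal B$; $\mathrm{sconv}$ denotes countable convex combinations. $\mathcal P$ is pre-Hahn-localizable if there are a family $\mathcal Q$ of probability measures on $\mathcal F$ (localization) and sets $S_Q\in\mathcal F$ (supports) with $Q(S_R)=\delta_{QR}$ for $Q,R\in\mathcal Q$ and $\mathcal Q\lll\mathcal P\lll\mathrm{sconv}(\mathcal Q)$. It is Hahn-localizable if this holds with, in addition: for every family $E_Q\in\mathcal F$, $E_Q\subseteq S_Q$, there is $S\in\mathcal F$ with $Q(E_Q\setminus S)=0$ for all $Q$, and such that any $F\in\mathcal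 F$ with $Q(E_Q\setminus F)=0$ for all $Q$ satisfies $Q(S\setminus F)=0$ for all $Q$. *)

(* Defs.v *)
From HB Require Import structures.
From mathcomp Require Import all_boot all_order all_algebra.
From mathcomp Require Import all_classical all_reals all_analysis.
Set Implicit Arguments. Unset Strict Implicit. Unset Printing Implicit Defensive.
Import Order.TTheory GRing.Theory Num.Theory.
Import numFieldNormedType.Exports.
Local Open Scope classical_set_scope.
Local Open Scope ring_scope.

Section Defs.
Variables (R : realType) (T : Type).

Definition prob_on (F : set (set T)) (mu : set T -> R) : Prop :=
  [/\ mu setT = 1,
      (forall A, F A -> 0 <= mu A) &
      (forall A : nat -> set T, (forall n, F (A n)) -> trivIset setT A ->
         (fun n => \sum_(0 <= i < n) mu (A i)) @ \oo --> mu (\bigcup_n A n))].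

Definition abs_cont (F : set (set T)) (mu nu : set T -> R) : Prop :=
  forall A, F A -> nu A = 0 -> mu A = 0.

Definition eq_on (F : set (set T)) (mu nu : set T -> R) : Prop :=
  forall A, F A -> mu A = nu A.

Definition sconv (F : set (set T)) (I : Type) (Q : I -> set T -> R)
    (mu : set T -> R) : Prop :=
  exists (c : nat -> R) (q : nat -> I),
    [/\ (forall n, 0 <= c n),
        (fun n => \sum_(0 <= k < n) c k) @ \oo --> (1 : R) &
        (forall A, F A ->
           (fun n => \sum_(0 <= k < n) c k * Q (q k) A) @ \oo --> mu A)].

Definition fam_ac (F : set (set T)) (I J : Type)
    (A : I -> set T -> R) (B : J -> set T -> R) : Prop :=
  forall i, exists j, abs_cont F (A i) (B j).

Definition fam_ac_sconv (F : set (set T)) (J I : Type)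
    (P : J -> set T -> R) (Q : I -> set T -> R) : Prop :=
  forall j, exists mu, sconv F Q mu /\ abs_cont F (P j) mu.

Definition completion (F : set (set T)) (mu : set T -> R) : set (set T) :=
  [set A | exists B N Z, [/\ F B, F N, mu N = 0, Z `<=` N & A = B `|` Z]].

Definition fam_completion (F : set (set T)) (I : Type) (Rs : I -> set T -> R)
  : set (set T) := [set A | forall i, completion F (Rs i) A].

(* canonical extension of mu (given on F) to all sets: the outer measure;
   on the completion F^mu it is the unique extension of mu *)
Definition cext (F : set (set T)) (mu : set T -> R) : set T -> R :=
  fun A => inf [set mu B | B in [set B | F B /\ A `<=` B]].

Definition localization (F : set (set T)) (J I : Type)
    (P : J -> set T -> R) (Q : I -> set T -> R) (S : I -> set T) : Prop :=
  [/\ (forall i, prob_on F (Q i)),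
      (forall i, F (S i)),
      (forall i k, Q i (S k) = if `[< eq_on F (Q i) (Q k) >] then 1 else 0),
      fam_ac F Q P &
      fam_ac_sconv F P Q].

Definition hahn_cond (F : set (set T)) (I : Type)
    (Q : I -> set T -> R) (S : I -> set T) : Prop :=
  forall E : I -> set T, (forall i, F (E i) /\ E i `<=` S i) ->
    exists S0, [/\ F S0,
      (forall i, Q i (E i `\` S0) = 0) &
      (forall G, F G -> (forall i, Q i (E i `\` G) = 0) ->
         forall i, Q i (S0 `\` G) = 0)].

Definition pre_hahn_localizable (F : set (set T)) (J : Type)
    (P : J -> set T -> R) : Prop :=
  [/\ sigma_algebra setT F, (forall j, prob_on F (P j)) &
      exists (I : Type) (Q : I -> set T -> R) (S : I -> set T),
        localization F P Q S].

Definition hahn_localizable (F : set (set T)) (J : Type)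
    (P : J -> set T -> R) : Prop :=
  [/\ sigma_algebra setT F, (forall j, prob_on F (P j)) &
      exists (I : Type) (Q : I -> set T -> R) (S : I -> set T),
        localization F P Q S /\ hahn_cond F Q S].

End Defs.

(* Main.v *)
Require Import Defs.
From HB Require Import structures.
From mathcomp Require Import all_boot all_order all_algebra.
From mathcomp Require Import all_classical all_reals all_analysis.
Set Implicit Arguments. Unset Strict Implicit.
Import Order.TTheory GRing.Theory Num.Theory.
Import numFieldNormedType.Exports.
Local Open Scope classical_set_scope.
Local Open Scope ring_scope.

Section M.
Variables (R : realType) (T : Type) (F : set (set T)).
Hypothesis sF : sigma_algebra setT F.

Lemma cst_cvg_eq (c l : R) : (fun _ : nat => c) @ \oo --> l -> l = c.
Proof. by move=> h; apply: (cvg_unique _ h (cvg_cst c)). Qed.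

Lemma cvg_ext (f g : nat -> R) (l : R) :
  (forall n, f n = g n) -> f @ \oo --> l -> g @ \oo --> l.
Proof. by move=> e; rewrite (funext e). Qed.

Lemma cvg_shk (u : nat -> R) (l : R) k :
  u @ \oo --> l -> (fun n => u (n + k)%N) @ \oo --> l.
Proof. by move=> h; rewrite (cvg_shiftn k u). Qed.

Lemma F0 : F set0. Proof. by case: sF. Qed.
Lemma FC A : F A -> F (~` A).
Proof. by case: sF => _ h _ /h; rewrite setTD. Qed.
Lemma FUn (A : nat -> set T) : (forall n, F (A n)) -> F (\bigcup_n A n).
Proof. by case: sF => _ _ h; apply: h. Qed.
Lemma FT : F setT. Proof. by rewrite -setC0; apply: FC; exact: F0. Qed.
Lemma FIn (A : nat -> set T) : (forall n, F (A n)) -> F (\bigcap_n A n).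
Proof.
move=> h; rewrite -[X in F X]setCK setC_bigcap; apply: FC; apply: FUn => n.
exact: FC.
Qed.
Lemma FU A B : F A -> F B -> F (A `|` B).
Proof.
move=> hA hB; have -> : A `|` B = \bigcup_n (if n == 0%N then A else B).
  apply/seteqP; split => x.
    by case=> h; [exists 0%N | exists 1%N].
  by case=> -[|n] _ /=; [left|right].
by apply: FUn => -[|n].
Qed.
Lemma FI A B : F A -> F B -> F (A `&` B).
Proof. by move=> hA hB; rewrite -[X in F X]setCK setCI; apply/FC/FU; apply: FC. Qed.
Lemma FD A B : F A -> F B -> F (A `\` B).
Proof. by move=> hA hB; apply: FI => //; apply: FC. Qed.
End M.
Section P.
Variables (R : realType) (T : Type) (F : set (set T)).
Hypothesis sF : sigma_algebra setT F.
Variable mu : set T -> R.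
Hypothesis hmu : prob_on F mu.

Lemma mu0 : mu set0 = 0.
Proof.
case: hmu => _ _ /(_ (fun _ => set0)) h.
have tr : trivIset setT (fun _ : nat => @set0 T) by move=> i j _ _ [x []].
have := h (fun _ => F0 sF) tr.
rewrite bigcup0 // => cv.
have cv1 := cv; rewrite -cvg_shiftS in cv1.
have cv2 : ((fun n => \sum_(0 <= i < n.+1) mu set0) - (fun n => \sum_(0 <= i < n) mu set0)) @ \oo --> mu set0 - mu set0.
  exact: cvgB.
rewrite subrr in cv2.
apply/esym/cst_cvg_eq.
apply: cvg_ext cv2 => n /=.
by rewrite !fctE big_nat_recr //= addrC addKr.
Qed.

Lemma mu_ge0 A : F A -> 0 <= mu A.
Proof. by case: hmu => _ h _; apply: h. Qed.

Lemma mu_add2 A B : F A -> F B -> A `&` B = set0 -> mu (A `|` B) = mu A + mu B.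
Proof.
move=> hA hB hAB.
pose G n := match n with 0%N => A | 1%N => B | _ => set0 end.
have FG n : F (G n) by case: n => [|[|n]] //=; exact: F0.
have tr : trivIset setT G.
  move=> i j _ _ [x [hi hj]].
  case: i hi => [|[|i]] hi; case: j hj => [|[|j]] hj //=.
  - by have : (A `&` B) x by []; rewrite hAB.
  - by have : (A `&` B) x by []; rewrite hAB.
have UG : \bigcup_n G n = A `|` B.
  apply/seteqP; split => x.
    by case=> -[|[|n]] _ //= h; [left|right].
  by case=> h; [exists 0%N | exists 1%N].
case: hmu => _ _ /(_ G FG tr); rewrite UG => /(cvg_shk 2) cv.
apply: cst_cvg_eq.
have e n : \sum_(0 <= i < n + 2) mu (G i) = mu A + mu B; last exact: (cvg_ext e cv).
rewrite addn2 big_nat_recl // big_nat_recl // big1 ?addr0 //=.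
by move=> i _; exact: mu0.
Qed.

Lemma mu_mono A B : F A -> F B -> A `<=` B -> mu A <= mu B.
Proof.
move=> hA hB AB.
have hBA : F (B `\` A) by exact: FD.
have -> : B = A `|` (B `\` A) by rewrite setDUK.
rewrite mu_add2 //; first by rewrite lerDl mu_ge0.
by rewrite setDE setICA setICr setI0.
Qed.

Lemma mu_sub2 A B : F A -> F B -> mu (A `|` B) <= mu A + mu B.
Proof.
move=> hA hB.
have hBA : F (B `\` A) by exact: FD.
have -> : A `|` B = A `|` (B `\` A).
  apply/seteqP; split=> x; last by case=> [h|[h _]]; [left|right].
  case=> h; first by left.
  by have [a|na] := pselect (A x); [left|right].
rewrite mu_add2 //; last by rewrite setDE setICA setICr setI0.
by rewrite lerD2l mu_mono // => x [].
Qed.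

Lemma mu_le1 A : F A -> mu A <= 1.
Proof. by move=> hA; case: hmu => <- _ _; apply: mu_mono => //; exact: FT. Qed.

Lemma mu_null_union (N : nat -> set T) : (forall n, F (N n)) ->
  (forall n, mu (N n) = 0) -> mu (\bigcup_n N n) = 0.
Proof.
move=> FN N0.
have FB n : F (\big[setU/set0]_(k < n) N k).
  elim: n => [|n IH]; first by rewrite big_ord0; exact: F0.
  by rewrite big_ord_recr /=; apply: FU.
have FD' n : F (seqDU N n) by apply: FD.
case: hmu => _ _ /(_ _ FD' (@trivIset_seqDU _ N)).
rewrite -seqDU_bigcup_eq => cv; apply: cst_cvg_eq.
have e n : \sum_(0 <= i < n) mu (seqDU N i) = 0; last exact: (cvg_ext e cv).
apply: big1 => i _; apply/eqP; rewrite eq_le mu_ge0 // andbT -(N0 i).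
by apply: mu_mono => // x [].
Qed.

Lemma mu_null_sub A B : F A -> F B -> mu B = 0 -> mu (A `|` B) = mu A.
Proof.
move=> hA hB B0; apply/eqP; rewrite eq_le; apply/andP; split.
  by have := mu_sub2 hA hB; rewrite B0 addr0.
apply: mu_mono => //; first exact: FU.
Qed.
End P.
Section C.
Variables (R : realType) (T : Type) (F : set (set T)).
Hypothesis sF : sigma_algebra setT F.
Variable mu : set T -> R.
Hypothesis hmu : prob_on F mu.

Let Sx A := [set mu B | B in [set B | F B /\ A `<=` B]].

Lemma Sx_n0 A : Sx A !=set0.
Proof. exists (mu setT), setT => //; split; [exact: FT | by []]. Qed.

Lemma Sx_lb A : has_lbound (Sx A).
Proof. by exists 0 => _ [B [hB _] <-]; exact: (mu_ge0 hmu). Qed.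

Lemma cext_le A C : F C -> A `<=` C -> cext F mu A <= mu C.
Proof. by move=> hC AC; apply: (ge_inf (Sx_lb A)); exists C. Qed.

Lemma cext_geF A B : F B -> B `<=` A -> mu B <= cext F mu A.
Proof.
move=> hB BA; apply: lb_le_inf; first exact: Sx_n0.
move=> _ [C [hC AC] <-]; apply: (mu_mono sF hmu) => //.
by move=> x /BA /AC.
Qed.

Lemma cext_ge0 A : 0 <= cext F mu A.
Proof.
apply: lb_le_inf; first exact: Sx_n0.
by move=> _ [C [hC AC] <-]; apply: (mu_ge0 hmu).
Qed.

Lemma cext_le1 A : cext F mu A <= 1.
Proof. by case: hmu => <- _ _; apply: cext_le => //; exact: FT. Qed.

Lemma cext_eqF A : F A -> cext F mu A = mu A.
Proof.
move=> hA; apply/eqP; rewrite eq_le cext_le //= cext_geF //.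
Qed.

Lemma cext_compl A B N Z : F B -> F N -> mu N = 0 -> Z `<=` N -> A = B `|` Z ->
  cext F mu A = mu B.
Proof.
move=> hB hN N0 ZN ->; apply/eqP; rewrite eq_le; apply/andP; split.
  rewrite -(mu_null_sub sF hmu hB hN N0); apply: cext_le; first exact: FU.
  by move=> x [h|/ZN h]; [left|right].
by apply: cext_geF => // x h; left.
Qed.

Lemma cext_null A : completion F mu A -> cext F mu A = 0 ->
  exists H, [/\ F H, A `<=` H & mu H = 0].
Proof.
move=> [B [N [Z [hB hN N0 ZN ->]]]] c0.
exists (B `|` N); split; first exact: FU.
  by move=> x [h|/ZN h]; [left|right].
by rewrite (mu_null_sub sF hmu hB hN N0) -c0 (cext_compl hB hN N0 ZN erefl).
Qed.

Lemma completionF A : F A -> completion F mu A.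
Proof.
move=> hA; exists A, set0, set0; split => //; first exact: F0.
  exact: (mu0 sF hmu).
by rewrite setU0.
Qed.

Lemma completion_sigma : sigma_algebra setT (completion F mu).
Proof.
split.
- exact: completionF (F0 sF).
- move=> _ [B [N [Z [hB hN N0 ZN ->]]]].
  exists (~` (B `|` N)), N, (N `&` ~` (B `|` Z)); split => //.
  + by apply: FC => //; exact: FU.
  + rewrite setTD; apply/seteqP; split => x.
      move=> h; have [n|nn] := pselect (N x); first by right.
      by left; move=> [b|n]; [apply: h; left|apply: nn].
    case=> [h|[_ h]] //.
    by move=> [b|z]; apply: h; [left|right; apply: ZN].
- move=> A hA.
  have hex : forall n, exists bnz : set T * set T * set T,
    [/\ F bnz.1.1, F bnz.1.2, mu bnz.1.2 = 0, bnz.2 `<=` bnz.1.2 &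
        A n = bnz.1.1 `|` bnz.2].
    move=> n; have [B [N [Z [? ? ? ? ?]]]] := hA n.
    by exists (B, N, Z).
  have [f hf] := choice hex.
  exists (\bigcup_n (f n).1.1), (\bigcup_n (f n).1.2), (\bigcup_n (f n).2).
  split.
  + by apply: FUn => // n; case: (hf n).
  + by apply: FUn => // n; case: (hf n).
  + by apply: (mu_null_union sF hmu) => // n; case: (hf n).
  + by move=> x [n _ h]; exists n => //; case: (hf n) => _ _ _ /(_ x h).
  + apply/seteqP; split => x.
      move=> [n _]; case: (hf n) => _ _ _ _ -> [h|h]; [left|right]; by exists n.
    by case=> -[n _ h]; exists n => //; case: (hf n) => _ _ _ _ ->; [left|right].
Qed.

Lemma cext_prob (G : set (set T)) : (forall A, G A -> completion F mu A) ->
  prob_on G (cext F mu).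
Proof.
move=> GC; split.
- by rewrite cext_eqF; [case: hmu | exact: FT].
- by move=> A _; exact: cext_ge0.
- move=> A hA tA.
  have hex : forall n, exists bnz : set T * set T * set T,
    [/\ F bnz.1.1, F bnz.1.2, mu bnz.1.2 = 0, bnz.2 `<=` bnz.1.2 &
        A n = bnz.1.1 `|` bnz.2].
    move=> n; have [B [N [Z [? ? ? ? ?]]]] := GC _ (hA n).
    by exists (B, N, Z).
  have [f hf] := choice hex.
  have FB n : F (f n).1.1 by case: (hf n).
  have BA n : (f n).1.1 `<=` A n by case: (hf n) => _ _ _ _ -> x h; left.
  have tB : trivIset setT (fun n => (f n).1.1).
    by move=> i j _ _ [x [bi bj]]; apply: tA => //; exists x; split; apply: BA.
  case: hmu => _ _ /(_ _ FB tB) cv.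
  have e n : \sum_(0 <= i < n) mu (f i).1.1 = \sum_(0 <= i < n) cext F mu (A i).
    apply: eq_bigr => i _; case: (hf i) => ? ? ? ? ?.
    by apply/esym; apply: cext_compl; eauto.
  have -> : cext F mu (\bigcup_n A n) = mu (\bigcup_n (f n).1.1); last exact: (cvg_ext e cv).
  apply: (@cext_compl _ _ (\bigcup_n (f n).1.2) (\bigcup_n (f n).2)).
  + by apply: FUn => // n.
  + by apply: FUn => // n; case: (hf n).
  + by apply: (mu_null_union sF hmu) => // n; case: (hf n).
  + by move=> x [n _ h]; exists n => //; case: (hf n) => _ _ _ /(_ x h).
  + apply/seteqP; split => x.
      move=> [n _]; case: (hf n) => _ _ _ _ -> [h|h]; [left|right]; by exists n.
    by case=> -[n _ h]; exists n => //; case: (hf n) => _ _ _ _ ->; [left|right].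
Qed.
End C.
Section Main.
Variables (R : realType) (T : Type) (F : set (set T)).
Hypothesis sF : sigma_algebra setT F.

Lemma fc_sub1 (J I : Type) (P : J -> set T -> R) (Q : I -> set T -> R) :
  fam_ac F Q P -> fam_completion F P `<=` fam_completion F Q.
Proof.
move=> ac A hA i; have [j hj] := ac i.
have [B [N [Z [hB hN N0 ZN ->]]]] := hA j.
by exists B, N, Z; split => //; apply: hj.
Qed.

Lemma fc_sub2 (J I : Type) (P : J -> set T -> R) (Q : I -> set T -> R) :
  (forall i, prob_on F (Q i)) ->
  fam_ac_sconv F P Q -> fam_completion F Q `<=` fam_completion F P.
Proof.
move=> hQ ac A hA j; have [mu [[c [q [c0 csum hmu]]] acj]] := ac j.
have hex : forall k, exists bnz : set T * set T * set T,
    [/\ F bnz.1.1, F bnz.1.2, Q (q k) bnz.1.2 = 0, bnz.2 `<=` bnz.1.2 &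
        A = bnz.1.1 `|` bnz.2].
  move=> k; have [B [N [Z [? ? ? ? ?]]]] := hA (q k).
  by exists (B, N, Z).
have [f hf] := choice hex.
pose L := \bigcup_k (f k).1.1.
pose U := \bigcap_k ((f k).1.1 `|` (f k).1.2).
have FL : F L by apply: FUn => // k; case: (hf k).
have FU' : F U by apply: FIn => // k; case: (hf k) => ? ? _ _ _; apply: FU.
have LA : L `<=` A by move=> x [k _]; case: (hf k) => _ _ _ _ -> h; left.
have ULN k : U `\` L `<=` (f k).1.2.
  move=> x [/(_ k Logic.I) [h|h] nL] //; exfalso; apply: nL; by exists k.
have mu0' : mu (U `\` L) = 0.
  have := hmu _ (FD sF FU' FL) => cv; apply: cst_cvg_eq.
  have e n : \sum_(0 <= k < n) c k * Q (q k) (U `\` L) = 0; last exact: (cvg_ext e cv).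
  apply: big1 => k _.
  have -> : Q (q k) (U `\` L) = 0; last by rewrite mulr0.
  case: (hf k) => ? ? Nk0 _ _; apply/eqP; rewrite eq_le -{1}Nk0.
  by rewrite (mu_mono sF (hQ _) (FD sF FU' FL) _ (ULN k)) // (mu_ge0 (hQ _) (FD sF FU' FL)).
exists L, (U `\` L), (A `\` L); split => //.
- exact: FD.
- exact: acj (FD sF FU' FL) mu0'.
- move=> x [hx nL]; split => // k _.
  case: (hf k) => _ _ _ ZN eA; move: hx; rewrite eA => -[h|/ZN h]; [left|right] => //.
- apply/seteqP; split => x; last by case=> [/LA|[]].
  by move=> h; have [l|nl] := pselect (L x); [left|right].
Qed.

Lemma fc_sigma (J : Type) (P : J -> set T -> R) : (forall j, prob_on F (P j)) ->
  sigma_algebra setT (fam_completion F P).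
Proof.
move=> hP; split.
- by move=> j; case: (completion_sigma sF (hP j)).
- by move=> A hA j; case: (completion_sigma sF (hP j)) => _ h _; apply: h.
- by move=> A hA j; case: (completion_sigma sF (hP j)) => _ _ h; apply: h => n; apply: hA.
Qed.

Lemma fc_F (J : Type) (P : J -> set T -> R) : (forall j, prob_on F (P j)) ->
  F `<=` fam_completion F P.
Proof. by move=> hP A hA j; apply: completionF. Qed.

Lemma cext_ext (mu nu : set T -> R) : eq_on F mu nu -> cext F mu = cext F nu.
Proof.
move=> e; apply/funext => A; rewrite /cext; congr inf.
apply/seteqP; split => _ [B hB <-]; exists B => //; case: hB => hB _.
  by rewrite e.
by rewrite e.
Qed.

Lemma loc_ext (J I : Type) (P : J -> set T -> R) (Q : I -> set T -> R) (S : I -> set T) :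
  (forall j, prob_on F (P j)) -> localization F P Q S ->
  localization (fam_completion F P) (fun j => cext F (P j)) (fun i => cext F (Q i)) S.
Proof.
move=> hP [hQ hS hQS ac acs].
have GQ : fam_completion F P `<=` fam_completion F Q by apply: fc_sub1.
split.
- by move=> i; apply: (cext_prob sF (hQ i)) => A /GQ; apply.
- by move=> i; apply: fc_F.
- move=> i k; rewrite (cext_eqF sF (hQ i) (hS k)) hQS.
  congr (if _ then _ else _); apply: asbool_equiv_eq; split.
    by move=> e A _; rewrite (cext_ext e).
  move=> e A hA; rewrite -(cext_eqF sF (hQ i) hA) -(cext_eqF sF (hQ k) hA).
  by apply: e; apply: fc_F.
- move=> i; have [j hj] := ac i; exists j => A hA c0.
  have [H [FH AH H0]] := cext_null sF (hP j) (hA j) c0.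
  apply/eqP; rewrite eq_le cext_ge0 // andbT -(hj _ FH H0).
  exact: (cext_le (hQ i) FH AH).
- move=> j; have [mu [[c [q [c0 csum hmu]]] acj]] := acs j.
  pose s A n := \sum_(0 <= k < n) c k * cext F (Q (q k)) A.
  have s_nd A : {homo s A : n m / (n <= m)%N >-> n <= m}.
    move=> n m nm; rewrite /s (big_cat_nat (leq0n n) nm) /= lerDl.
    by apply: sumr_ge0 => k _; apply: mulr_ge0 => //; exact: cext_ge0.
  have cs_nd : {homo (fun n => \sum_(0 <= k < n) c k) : n m / (n <= m)%N >-> n <= m}.
    move=> n m nm; rewrite (big_cat_nat (leq0n n) nm) /= lerDl.
    by apply: sumr_ge0 => k _.
  have cs_le1 n : \sum_(0 <= k < n) c k <= 1.
    have := nondecreasing_cvgn_le cs_nd (cvgP _ csum) n.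
    by rewrite (cvg_lim _ csum).
  have s_cvg A : cvgn (s A).
    apply: nondecreasing_is_cvgn; first exact: s_nd.
    exists 1 => _ [n _ <-]; apply: le_trans (cs_le1 n).
    apply: ler_sum => k _; rewrite ler_piMr //; exact: (cext_le1 sF (hQ _)).
  exists (fun A => limn (s A)); split.
    by exists c, q; split => // A _; exact: s_cvg.
  move=> A hA /= l0.
  have term0 k : c k * cext F (Q (q k)) A = 0.
    apply/eqP; rewrite eq_le mulr_ge0 ?cext_ge0 // andbT -l0.
    apply: le_trans (nondecreasing_cvgn_le (s_nd A) (s_cvg A) k.+1).
    rewrite /s big_nat_recr //= lerDr.
    by apply: sumr_ge0 => i _; apply: mulr_ge0 => //; exact: cext_ge0.
  have hex k : exists H, [/\ F H, A `<=` H & c k * Q (q k) H = 0].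
    have := term0 k; move/eqP; rewrite mulf_eq0 => /orP[/eqP ck0|/eqP ce0].
      by exists setT; split => //; [exact: FT | rewrite ck0 mul0r].
    have [H [FH AH H0]] := cext_null sF (hQ (q k)) (GQ _ hA (q k)) ce0.
    by exists H; split => //; rewrite H0 mulr0.
  have [H hH] := choice hex.
  pose Hs := \bigcap_k H k.
  have FHs : F Hs by apply: FIn => // k; case: (hH k).
  have mu0 : mu Hs = 0.
    have := hmu _ FHs => cv; apply: cst_cvg_eq.
    have e n : \sum_(0 <= k < n) c k * Q (q k) Hs = 0; last exact: (cvg_ext e cv).
    apply: big1 => k _; case: (hH k) => FH _ H0.
    apply/eqP; rewrite eq_le mulr_ge0 ?(mu_ge0 (hQ _)) // andbT -H0.
    rewrite ler_wpM2l //; apply: (mu_mono sF (hQ _)) => //.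
    by move=> x /(_ k Logic.I).
  apply/eqP; rewrite eq_le cext_ge0 // andbT -(acj _ FHs mu0).
  apply: (cext_le (hP j)) => // x Ax k _.
  by case: (hH k) => _ /(_ x Ax).
Qed.

Lemma mu_compl0 (mu : set T -> R) (A : set T) : prob_on F mu -> F A -> mu A = 1 -> mu (~` A) = 0.
Proof.
move=> hmu hA A1.
have := mu_add2 sF hmu hA (FC sF hA) (setICr A).
rewrite setUv; case: hmu => -> _ _; rewrite A1 => e.
by apply: (addrI 1); rewrite addr0 -e.
Qed.

Lemma hahn_ext (I : Type) (Q : I -> set T -> R) (S : I -> set T) (G : set (set T)) :
  sigma_algebra setT G -> F `<=` G -> G `<=` fam_completion F Q ->
  (forall i, prob_on F (Q i)) -> (forall i, F (S i)) -> (forall i, Q i (S i) = 1) ->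
  (forall i k, i <> k -> S i `&` S k = set0) ->
  hahn_cond F Q S -> hahn_cond G (fun i => cext F (Q i)) S.
Proof.
move=> sG FG GQ hQ hS hS1 dS hc E hE.
have hex : forall i, exists bnz : set T * set T * set T,
    [/\ F bnz.1.1, F bnz.1.2, Q i bnz.1.2 = 0, bnz.2 `<=` bnz.1.2 &
        E i = bnz.1.1 `|` bnz.2].
  move=> i; have [B [N [Z [? ? ? ? ?]]]] := GQ _ (proj1 (hE i)) i.
  by exists (B, N, Z).
have [f hf] := choice hex.
have FB i : F (f i).1.1 by case: (hf i).
have BS i : (f i).1.1 `<=` S i.
  by move=> x h; apply: (proj2 (hE i)); case: (hf i) => _ _ _ _ ->; left.
have BE i : (f i).1.1 `<=` E i by move=> x h; case: (hf i) => _ _ _ _ ->; left.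
have [S0 [FS0 h1 h2]] := hc (fun i => (f i).1.1) (fun i => conj (FB i) (BS i)).
have GD A B : G A -> G B -> G (A `\` B) by move=> ? ?; apply: (FD sG).
exists S0; split; first exact: FG.
- move=> i; case: (hf i) => _ FN N0 ZN Ei.
  apply/eqP; rewrite eq_le cext_ge0 // andbT.
  have FBS : F ((f i).1.1 `\` S0) by apply: FD.
  apply: le_trans (cext_le (hQ i) (FU sF FBS FN) _) _.
    by move=> x [hx nS]; move: hx; rewrite Ei => -[h|/ZN h]; [left|right].
  by rewrite (mu_null_sub sF (hQ i) FBS FN N0) h1.
- move=> Gs hGs hG i.
  have [C [M [Y [FC' FM M0 YM eGs]]]] := GQ _ hGs i.
  have [H [FH EH H0]] := cext_null sF (hQ i) (GQ _ (GD _ _ (proj1 (hE i)) hGs) i) (hG i).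
  pose G2 := S0 `\` (S i `\` C).
  have FG2 : F G2 by apply: FD => //; apply: FD.
  have claim : forall j, Q j ((f j).1.1 `\` G2) = 0.
    move=> j; apply/eqP; rewrite eq_le (mu_ge0 (hQ j)) ?andbT; last exact: FD.
    have [->|ji] := pselect (j = i).
      have FHM : F (H `|` M) by apply: FU.
      have FBS : F ((f i).1.1 `\` S0) by apply: FD.
      apply: le_trans (mu_mono sF (hQ i) (FD sF (FB i) FG2) (FU sF FBS FHM) _) _.
        move=> x [hB nG2]; have [s0|ns0] := pselect (S0 x); last by left.
        right; have [sc|nsc] := pselect ((S i `\` C) x); last first.
          by exfalso; apply: nG2; split.
        case: sc => _ nC; have [g|ng] := pselect (Gs x).
          by right; move: g; rewrite eGs => -[//|/YM].
        by left; apply: EH; split => //; apply: BE.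
      apply: le_trans (mu_sub2 sF (hQ i) FBS FHM) _.
      rewrite h1 add0r; apply: le_trans (mu_sub2 sF (hQ i) FH FM) _.
      by rewrite H0 M0 addr0.
    rewrite -(h1 j); apply: (mu_mono sF (hQ j)); [exact: FD | exact: FD |].
    move=> x [hB nG2]; split => // s0; apply: nG2; split => // -[si _].
    have : (S j `&` S i) x by split => //; apply: BS.
    by rewrite dS.
  have h3 := h2 G2 FG2 claim i.
  apply/eqP; rewrite eq_le cext_ge0 // andbT.
  have FD2 : F (S0 `\` G2) by apply: FD.
  have FSc : F (~` S i) by apply: FC.
  apply: le_trans (cext_le (hQ i) (FU sF FD2 FSc) _) _.
    move=> x [s0 nG]; have [si|nsi] := pselect (S i x); last by right.
    left; split => // -[_ []]; split => // cx; apply: nG.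
    by rewrite eGs; left.
  apply: le_trans (mu_sub2 sF (hQ i) FD2 FSc) _.
  by rewrite h3 (mu_compl0 (hQ i) (hS i) (hS1 i)) addr0.
Qed.
End Main.

Unset Implicit Arguments. Set Strict Implicit.

Theorem lemma3p6 (R : realType) (T : Type) (F : set (set T))
    (J I : Type) (P : J -> set T -> R) (Q : I -> set T -> R) (S : I -> set T) :
  sigma_algebra setT F ->
  (forall j, prob_on F (P j)) ->
  localization F P Q S ->
  [/\ fam_completion F P = fam_completion F Q,
      pre_hahn_localizable (fam_completion F P) (fun j => cext F (P j)) &
      ((exists (I' : Type) (Q' : I' -> set T -> R) (S' : I' -> set T),
          [/\ localization F P Q' S', hahn_cond F Q' S' &
              (forall i k, i <> k -> S' i `&` S' k = set0)]) ->
       hahn_localizable (fam_completion F P) (fun j => cext F (P j)))].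
Proof.
move=> sF hP loc.
have e1 : fam_completion F P = fam_completion F Q.
  case: loc => hQ hS hQS ac acs.
  by apply/seteqP; split; [exact: fc_sub1 | exact: fc_sub2].
split => //.
- split; first exact: fc_sigma.
    by move=> j; apply: (cext_prob sF (hP j)) => A hA; exact: hA j.
  by exists I, (fun i => cext F (Q i)), S; exact: loc_ext.
- move=> [I' [Q' [S' [loc' hc dS]]]].
  split; first exact: fc_sigma.
    by move=> j; apply: (cext_prob sF (hP j)) => A hA; exact: hA j.
  exists I', (fun i => cext F (Q' i)), S'; split; first exact: loc_ext.
  case: loc' => hQ' hS' hQS' ac' acs'.
  apply: hahn_ext => //.
  + exact: fc_sigma.
  + exact: fc_F.
  + exact: fc_sub1.
  + by move=> i; rewrite hQS' asboolT.
Qed.
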